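(* Let $\mu$ be a distribution over $\{-1,+1\}^n$, $\alpha\in(0,1)$, and $D\subseteq\mathbb R^n_{>0}$. Define $$D^{\mathrm{hom}}=\left\{(z_1,\dots,z_n,z_{\bar1},\dots,z_{\bar n})\in\mathbb R^{2n}_{>0}:\left(\tfrac{z_1}{z_{\bar1}},\dots,\tfrac{z_n}{z_{\bar n}}\right)\in D\right\}.$$ Then $\mu$ is $(1/\alpha)$-product dominated on $D$ if and only if $\mu^{\mathrm{hom}}$ is $(1/\alpha)$-entropically independent on $D^{\mathrm{hom}}$. In particular, $\mu$ is $(1/\alpha)$-product dominated if and only if $\mu^{\mathrm{hom}}$ is $(1/\alpha)$-entropically independent.
   Context: $\mu_i$ is the marginal of $\mu$ on coordinate $i$. The generating function of $\mu$ is $g_\mu(z)=\sum_\sigma\mu(\sigma)\prod_{i:\sigma_i=+1}z_i$. $\mu$ is $(1/\alpha)$-product dominated on $D$ if for all $z\in D$, $g_\mu(z_1^\alpha,\dots,z_n^\alpha)^{1/\alpha}\le\prod_{i=1}^n(\mu_i(+1)z_i+\mu_i(-1))$; ''product dominated'' without qualification means on $D=\mathbb R^n_{>0}$. Homogenization: with $[\bar n]=\{\bar1,\dots,\bar n\}$, $\mu^{\mathrm{hom}}$ is the distribution over $\binom{[n]\cup[\bar n]}{n}$ with $\mu^{\mathrm{hom}}(S_\sigma)=\mu(\sigma)$, where $S_\sigma=\{i:\sigma_i=+1\}\cup\{\bar i:\sigma_i=-1\}$, and $\mu^{\mathrm{hom}}(T)=0$ for other $T$. For a distribution $\pi$ over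 $\binom{U}{k}$ with generating function $g_\pi(z)=\sum_S\pi(S)\prod_{i\in S}z_i$, $\pi$ is $(1/\alpha)$-entropically independent on $D'\subseteq\mathbb R^U_{>0}$ if for all $z\in D'$, $g_\pi(z^\alpha)^{1/(k\alpha)}\le\frac1k\sum_{i\in U}\Pr_{S\sim\pi}[i\in S]z_i$ (with $z^\alpha$ coordinatewise); without qualification, on $D'=\mathbb R^U_{>0}$. *)

(* Defs.v *)
From HB Require Import structures.
From mathcomp Require Import all_boot all_order all_algebra.
From mathcomp Require Import classical_sets reals exp.
Set Implicit Arguments. Unset Strict Implicit. Unset Printing Implicit Defensive.
Import Order.TTheory GRing.Theory Num.Theory.
Local Open Scope ring_scope.
Local Open Scope classical_set_scope.

(* Configurations sigma in {-1,+1}^n, encoded as boolean vectors: true = +1, false = -1. *)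
Notation cube n := {ffun 'I_n -> bool}.

Section Defs.
Variable R : realType.

Definition is_distribution (T : finType) (mu : T -> R) :=
  (forall t, 0 <= mu t) /\ \sum_t mu t = 1.

Definition marg_plus n (mu : cube n -> R) (i : 'I_n) : R :=
  \sum_(s : cube n | s i) mu s.
Definition marg_minus n (mu : cube n -> R) (i : 'I_n) : R :=
  \sum_(s : cube n | ~~ s i) mu s.

Definition gen_cube n (mu : cube n -> R) (z : 'I_n -> R) : R :=
  \sum_(s : cube n) mu s * \prod_(i | s i) z i.

Definition product_dominated n (mu : cube n -> R) (alpha : R)
    (D : set ('I_n -> R)) : Prop :=
  forall z, D z ->
    powR (gen_cube mu (fun i => powR (z i) alpha)) alpha^-1
    <= \prod_(i < n) (marg_plus mu i * z i + marg_minus mu i).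

(* ground set [n] \cup [nbar] : inl i = i, inr i = ibar *)
Definition S_of n (s : cube n) : {set 'I_n + 'I_n} :=
  [set u | match u with inl i => s i | inr i => ~~ s i end].

Definition mu_hom n (mu : cube n -> R) (T : {set 'I_n + 'I_n}) : R :=
  \sum_(s : cube n | S_of s == T) mu s.

Definition gen_set (U : finType) (pi : {set U} -> R) (z : U -> R) : R :=
  \sum_(S : {set U}) pi S * \prod_(i in S) z i.

Definition incl_prob (U : finType) (pi : {set U} -> R) (i : U) : R :=
  \sum_(S : {set U} | i \in S) pi S.

(* (1/alpha)-entropically independent on D', for pi over k-subsets of U *)
Definition entropically_independent (U : finType) (k : nat) (pi : {set U} -> R)
    (alpha : R) (D' : set (U -> R)) : Prop :=
  forall z, D' z ->
    powR (gen_set pi (fun u => powR (z u) alpha)) (k%:R * alpha)^-1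
    <= (k%:R)^-1 * \sum_(i : U) incl_prob pi i * z i.

Definition pos_orthant (U : Type) : set (U -> R) := [set z | forall u, 0 < z u].

Definition D_hom n (D : set ('I_n -> R)) : set ('I_n + 'I_n -> R) :=
  [set z | (forall u, 0 < z u) /\ D (fun i => z (inl i) / z (inr i))].

End Defs.

(* Main.v *)
Require Import Defs.
From HB Require Import structures.
From mathcomp Require Import all_boot all_order all_algebra.
From mathcomp Require Import boolp classical_sets reals exp.
From mathcomp Require Import lra.
Import Order.TTheory GRing.Theory Num.Theory.
Local Open Scope ring_scope.
Local Open Scope classical_set_scope.

Section S.
Variable R : realType.

Lemma powR_prod (I : finType) (P : pred I) (x : I -> R) r :
  (forall i, 0 <= x i) -> powR (\prod_(i | P i) x i) r = \prod_(i | P i) powR (x i) r.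
Proof.
move=> x0.
suff: 0 <= \prod_(i | P i) x i /\ powR (\prod_(i | P i) x i) r = \prod_(i | P i) powR (x i) r by case.
apply: (big_rec2 (fun y1 y2 => 0 <= y1 /\ powR y1 r = y2)) => [|i y1 y2 _ [y0 <-]].
  by rewrite powR1.
by split; [apply: mulr_ge0 | rewrite powRM].
Qed.

Lemma key_pow (a B G : R) : 0 < a -> 0 <= B -> 0 <= G ->
  powR (powR B a * G) a^-1 = B * powR G a^-1.
Proof.
move=> a0 B0 G0; rewrite powRM ?powR_ge0 // -powRrM mulfV ?gt_eqF // powRr1 //.
Qed.

Lemma agm n (E : 'I_n -> R) : (forall i, 0 <= E i) ->
  \prod_i E i <= ((\sum_i E i) / n%:R) ^+ n.
Proof.
move=> E0; have := leif_AGM (A := predT) (fun i _ => E0 i).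
by move=> [+ _]; rewrite cardT size_enum_ord.
Qed.

Lemma pos_aux (p q z : R) : 0 <= p -> 0 <= q -> p + q = 1 -> 0 < z -> 0 < p * z + q.
Proof. move=> *; nra. Qed.

Variable n : nat.
Variable mu : cube n -> R.

Lemma gen_hom_gen (f : 'I_n + 'I_n -> R) :
  gen_set (mu_hom mu) f =
  \sum_s mu s * \prod_i (if s i then f (inl i) else f (inr i)).
Proof.
rewrite /gen_set /mu_hom.
under eq_bigr do rewrite big_distrl.
have -> : \sum_s mu s * \prod_i (if s i then f (inl i) else f (inr i)) =
          \sum_s mu s * \prod_(u in S_of s) f u.
  apply: eq_bigr => s _; congr (_ * _).
  transitivity (\prod_i ((if inl i \in S_of s then f (inl i) else 1) *
                          (if inr i \in S_of s then f (inr i) else 1))).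
    by apply: eq_bigr => i _; rewrite !inE; case: (s i); rewrite /= ?mulr1 ?mul1r.
  rewrite big_split /= [RHS]big_sumType; congr (_ * _); apply/esym/big_mkcond.
rewrite (partition_big (fun s => S_of s) xpredT) //=.
by apply: eq_bigr => T _; apply: eq_big => // s /eqP ->.
Qed.

Lemma incl_hom u : incl_prob (mu_hom mu) u = \sum_(s | u \in S_of s) mu s.
Proof.
rewrite /incl_prob /mu_hom (partition_big (fun s => S_of s) (fun T => u \in T)) //.
apply: eq_bigr => T uT; apply: eq_bigl => s.
by case: (eqVneq (S_of s) T) => [->|]; rewrite ?uT ?andbF.
Qed.

Lemma incl_l i : incl_prob (mu_hom mu) (inl i) = marg_plus mu i.
Proof. by rewrite incl_hom; apply: eq_bigl => s; rewrite inE. Qed.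
Lemma incl_r i : incl_prob (mu_hom mu) (inr i) = marg_minus mu i.
Proof. by rewrite incl_hom; apply: eq_bigl => s; rewrite inE. Qed.

Lemma sum_incl (w : 'I_n + 'I_n -> R) :
  \sum_u incl_prob (mu_hom mu) u * w u =
  \sum_i (marg_plus mu i * w (inl i) + marg_minus mu i * w (inr i)).
Proof. by rewrite big_sumType /= big_split /=; congr (_ + _); apply: eq_bigr => i _;
  rewrite ?incl_l ?incl_r. Qed.

Lemma gen_hom (w : 'I_n + 'I_n -> R) a : (forall u, 0 < w u) ->
  gen_set (mu_hom mu) (fun u => powR (w u) a) =
  powR (\prod_i w (inr i)) a * gen_cube mu (fun i => powR (w (inl i) / w (inr i)) a).
Proof.
move=> w0; rewrite gen_hom_gen /gen_cube big_distrr /=; apply: eq_bigr => s _.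
rewrite mulrCA; congr (_ * _).
rewrite powR_prod; last by move=> i; apply: ltW.
rewrite [X in _ = _ * X]big_mkcond -big_split /=; apply: eq_bigr => i _.
case: (s i); last by rewrite mulr1.
rewrite -powRM ?ltW ?divr_gt0 // mulrC divfK ?gt_eqF //.
Qed.

Lemma marg_sum i : is_distribution mu -> marg_plus mu i + marg_minus mu i = 1.
Proof.
by case=> _ <-; rewrite /marg_plus /marg_minus (bigID (fun s : cube n => s i) xpredT mu).
Qed.

Lemma marg_ge0 i : is_distribution mu -> 0 <= marg_plus mu i /\ 0 <= marg_minus mu i.
Proof. by case=> h _; split; apply: sumr_ge0 => s _. Qed.


Lemma dir1 (alpha : R) (D : set ('I_n -> R)) : (0 < n)%N -> is_distribution mu -> 0 < alpha ->
  product_dominated mu alpha D -> entropically_independent n (mu_hom mu) alpha (D_hom D).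
Proof.
move=> n0 hmu a0 PD w [w0 Dw].
set z := fun i => w (inl i) / w (inr i).
rewrite gen_hom // sum_incl.
set B := \prod_i w (inr i).
set G := gen_cube mu _.
have B0 : 0 <= B by apply: prodr_ge0 => i _; apply: ltW.
have G0 : 0 <= G.
  apply: sumr_ge0 => s _; apply: mulr_ge0; first by case: hmu.
  by apply: prodr_ge0 => i _; apply: powR_ge0.
set S := \sum_i _.
have E0 i : 0 <= marg_plus mu i * w (inl i) + marg_minus mu i * w (inr i).
  by case: (marg_ge0 i hmu) => ? ?; apply: addr_ge0; apply: mulr_ge0 => //; apply: ltW.
have S0 : 0 <= S by apply: sumr_ge0.
have nR : (n%:R : R) != 0 by rewrite pnatr_eq0 -lt0n.
have X : B * powR G alpha^-1 <= (S / n%:R) ^+ n.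
  apply: le_trans _ (@agm n _ E0).
  apply: le_trans (ler_wpM2l B0 (PD _ Dw)) _.
  rewrite -big_split /=; rewrite le_eqVlt; apply/orP; left; apply/eqP/eq_bigr => i _; rewrite /z.
  by rewrite mulrDr mulrCA (mulrC (w (inr i))) divfK ?gt_eqF // [w (inr i) * _]mulrC.
have -> : (n%:R * alpha)^-1 = alpha^-1 * n%:R^-1 by rewrite invfM mulrC.
rewrite powRrM key_pow //.
have -> : n%:R^-1 * S = powR ((S / n%:R) ^+ n) n%:R^-1.
  by rewrite -powR_mulrn ?divr_ge0 // -powRrM mulfV // powRr1 ?divr_ge0 // mulrC.
apply: ge0_ler_powR => //; rewrite ?invr_ge0 ?nnegrE //.
  by apply: mulr_ge0 => //; apply: powR_ge0.
by apply: exprn_ge0; rewrite divr_ge0.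
Qed.


Lemma dir2 (alpha : R) (D : set ('I_n -> R)) : (0 < n)%N -> is_distribution mu -> 0 < alpha ->
  D `<=` @pos_orthant R 'I_n ->
  entropically_independent n (mu_hom mu) alpha (D_hom D) -> product_dominated mu alpha D.
Proof.
move=> n0 hmu a0 Dpos EI z Dz.
have z0 : forall i, 0 < z i := Dpos _ Dz.
pose c := fun i => marg_plus mu i * z i + marg_minus mu i.
have c0 i : 0 < c i.
  by have [? ?] := marg_ge0 i hmu; apply: pos_aux => //; exact: marg_sum.
pose w := fun u => match u with inl i => z i / c i | inr i => (c i)^-1 end.
have w0 : forall u, 0 < w u.
  by case=> i /=; [rewrite divr_gt0 | rewrite invr_gt0].
have wz : (fun i => w (inl i) / w (inr i)) = z.
  by apply/funext => i /=; rewrite invrK divfK ?gt_eqF.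
have nR : (n%:R : R) != 0 by rewrite pnatr_eq0 -lt0n.
have := EI w (conj w0 _); rewrite wz => /(_ Dz).
rewrite gen_hom // sum_incl.
have -> : (fun i => powR (w (inl i) / w (inr i)) alpha) = (fun i => powR (z i) alpha).
  by apply/funext => i; rewrite (congr1 (fun f => f i) wz).
have -> : \sum_i (marg_plus mu i * w (inl i) + marg_minus mu i * w (inr i)) = n%:R.
  rewrite (eq_bigr (fun=> 1)) => [|i _]; first by rewrite sumr_const card_ord.
  rewrite /w /c /= mulrA -mulrDl mulfV //; exact: lt0r_neq0 (c0 i).
rewrite mulVf //.
set C := \prod_i w (inr i).
set G := gen_cube mu _.
have C0 : 0 < C by apply: prodr_gt0 => i _.
have G0 : 0 <= G.
  apply: sumr_ge0 => s _; apply: mulr_ge0; first by case: hmu.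
  by apply: prodr_ge0 => i _; apply: powR_ge0.
have e0 : 0 < (n%:R * alpha)^-1 by rewrite invr_gt0 mulr_gt0 // ltr0n.
move=> H.
have X1 : powR C alpha * G <= 1.
  rewrite leNgt; apply/negP => h; move: H; rewrite leNgt => /negP; apply.
  have e1 : powR 1 (n%:R * alpha)^-1 = 1 by rewrite powR1.
  rewrite -[X in X < _]e1; apply: gt0_ltr_powR => //; rewrite nnegrE //.
  by apply: mulr_ge0 => //; apply: powR_ge0.
have X2 : C * powR G alpha^-1 <= 1.
  rewrite -(@key_pow alpha C G a0 (ltW C0) G0).
  have e1 : powR 1 alpha^-1 = 1 by rewrite powR1.
  rewrite -[X in _ <= X]e1; apply: ge0_ler_powR => //; rewrite ?invr_ge0 ?ltW ?nnegrE //.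
  by apply: mulr_ge0 => //; apply: powR_ge0.
have -> : powR G alpha^-1 = C^-1 * (C * powR G alpha^-1).
  by rewrite mulrA mulVf ?gt_eqF // mul1r.
have -> : \prod_i (marg_plus mu i * z i + marg_minus mu i) = C^-1.
  by rewrite /C /= prodfV invrK.
by rewrite -[X in _ <= X]mulr1; apply: ler_wpM2l => //; rewrite invr_ge0 ltW.
Qed.

End S.

Theorem lemma4p4 (R : realType) (n : nat) (mu : cube n -> R) (alpha : R) :
  (0 < n)%N -> is_distribution mu -> 0 < alpha < 1 ->
  (forall D : set ('I_n -> R), D `<=` @pos_orthant R 'I_n ->
     product_dominated mu alpha D <->
     entropically_independent n (mu_hom mu) alpha (D_hom D)) /\
  (product_dominated mu alpha (@pos_orthant R 'I_n) <->
     entropically_independent n (mu_hom mu) alpha (@pos_orthant R ('I_n + 'I_n))).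
Proof.
move=> n0 hmu /andP[a0 _].
have part1 : forall D : set ('I_n -> R), D `<=` @pos_orthant R 'I_n ->
     product_dominated mu alpha D <->
     entropically_independent n (mu_hom mu) alpha (D_hom D).
  by move=> D Dpos; split; [exact: dir1 | exact: dir2].
split => //.
have pos_eq : entropically_independent n (mu_hom mu) alpha (D_hom (@pos_orthant R 'I_n)) <->
   entropically_independent n (mu_hom mu) alpha (@pos_orthant R ('I_n + 'I_n)).
  split=> H w Hw; apply: H.
    by split=> // i; rewrite divr_gt0.
  by case: Hw.
rewrite -pos_eq; exact: part1.
Qed.
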